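(* Consider finite games in which all players have the same nonnegative utility function $u$ with $\max_S u>0$, with the solution set being the set $\mathrm{NE}$ of pure Nash equilibria. For every such game, $\mathrm{PoS}=\mathrm{PoTS}=1$. On the other hand, for every $\varepsilon>0$ there is such a game with $\mathrm{PoA}<\varepsilon$, and for every $\delta>0$ there is such a game with $\mathrm{PoA}>0$ and $\mathrm{PoTA}\le\mathrm{PoSTA}\le\delta\cdot\mathrm{PoA}$.
   Context: $\mathrm{sw}(s)=\sum_iu_i(s)$. A transition of $\mathrm{NE}$ is a profile $t$ with $t_i=d_i$ for some $d\in\mathrm{NE}$, for every $i$; $T(\mathrm{NE})$ is the set of transitions. $\mathrm{BR}_i(s_{-i})$ is the set of best responses of $i$. A stable transition is $s\in T(\mathrm{NE})$ such that for every $i$ with $s_i\notin\mathrm{BR}_i(s_{-i})$ there is $j\neq i$ with $s_j\notin\mathrm{BR}_j(s_{-j})$ and some $\hat s_j\in\mathrm{BR}_j(s_{-j})$ with $s_i\in\mathrm{BR}_i(\hat s_j,s_{-\{i,j\}})$; $ST(\mathrm{NE})$ is the set of stable transitions. $\mathrm{PoA}=\min_{\mathrm{NE}}\mathrm{sw}/\max_S\mathrm{sw}$, $\mathrm{PoS}=\max_{\mathrm{NE}}\mathrm{sw}/\max_S\mathrm{sw}$, $\mathrm{PoTA}=\min_{T(\mathrm{NE})}\mathrm{sw}/\max_S\mathrm{sw}$, $\mathrm{PoTS}=\max_{T(\mathrm{NE})}\mathrm{sw}/\max_S\mathrm{sw}$, $\mathrm{PoSTA}=\min_{ST(\mathrm{NE})}\mathrm{sw}/\max_S\mathrm{sw}$.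 *)

(* Defs.v *)
From HB Require Import structures.
From mathcomp Require Import all_boot all_order all_algebra.
Unset Printing Implicit Defensive.
Import Order.TTheory GRing.Theory Num.Theory.
Local Open Scope ring_scope.

(* Minimum / maximum of a finite list of reals; the value on the empty list is
   an (irrelevant) junk value 0.  All lists to which these are applied below
   are nonempty in the games considered. *)
Definition seqmin {R : realFieldType} (l : seq R) : R := foldr Num.min (head 0 l) l.
Definition seqmax {R : realFieldType} (l : seq R) : R := foldr Num.max (head 0 l) l.

Section Game.
Variables (R : realFieldType) (n : nat) (S : 'I_n -> finType).

Definition profile := {dffun forall i : 'I_n, S i}.

Variable u : profile -> R.

Definition upd (s : profile) (i : 'I_n) (a : S i) : profile :=
  [ffun j => dfwith s a j].

Definition isBR (i : 'I_n) (s : profile) (a : S i) : bool :=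
  [forall b : S i, u (upd s i b) <= u (upd s i a)].

Definition isNE (s : profile) : bool := [forall i, isBR i s (s i)].

Definition sw (s : profile) : R := \sum_(i < n) u s.

Definition isTrans (t : profile) : bool :=
  [forall i, [exists d : profile, isNE d && (t i == d i)]].

Definition isStableTrans (s : profile) : bool :=
  isTrans s &&
  [forall i, ~~ isBR i s (s i) ==>
     [exists j, (j != i) && ~~ isBR j s (s j) &&
        [exists h : S j, isBR j s h && isBR i (upd s j h) (s i)]]].

Definition optsw : R := seqmax [seq sw s | s <- enum [pred s : profile | true]].

Definition PoA  : R := seqmin [seq sw s | s <- enum [pred s : profile | isNE s]] / optsw.
Definition PoS  : R := seqmax [seq sw s | s <- enum [pred s : profile | isNE s]] / optsw.
Definition PoTA : R := seqmin [seq sw s | s <- enum [pred s : profile | isTrans s]] / optsw.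
Definition PoTS : R := seqmax [seq sw s | s <- enum [pred s : profile | isTrans s]] / optsw.
Definition PoSTA : R := seqmin [seq sw s | s <- enum [pred s : profile | isStableTrans s]] / optsw.

End Game.

Arguments profile {n} S.
Arguments upd {n S} s i a.
Arguments isBR {R n S} u i s a.
Arguments isNE {R n S} u s.
Arguments sw {R n S} u s.
Arguments isTrans {R n S} u t.
Arguments isStableTrans {R n S} u s.
Arguments optsw {R n S} u.
Arguments PoA {R n S} u.
Arguments PoS {R n S} u.
Arguments PoTA {R n S} u.
Arguments PoTS {R n S} u.
Arguments PoSTA {R n S} u.

Definition admissible (R : realFieldType) (n : nat) (S : 'I_n -> finType)
  (u : profile S -> R) : Prop :=
  (0 < n)%N /\ (forall s, 0 <= u s) /\ (exists s, 0 < u s).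
Arguments admissible {R n S} u.

(* Main.v *)
Require Import Defs.
From HB Require Import structures.
From mathcomp Require Import all_boot all_order all_algebra.
Import Order.TTheory GRing.Theory Num.Theory.
Local Open Scope ring_scope.

Section L.
Variable R : realFieldType.
Implicit Types l : seq R.

Lemma fmax_ge a l x : x \in a :: l -> x <= foldr Num.max a l.
Proof.
elim: l x => [|y l IH] x; rewrite ?inE.
  by move/eqP->.
rewrite /= le_max => /orP[/eqP->|/orP[/eqP->|xl]].
- by rewrite (IH a (mem_head _ _)) ?orbT.
- by rewrite lexx.
- by rewrite (IH x) ?orbT // inE xl orbT.
Qed.

Lemma fmax_mem a l : foldr Num.max a l \in a :: l.
Proof.
elim: l => [|y l IH] /=; first by rewrite mem_head.
case: (leP y (foldr Num.max a l)) => _.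
  by move: IH; rewrite !inE => /orP[->|->]; rewrite ?orbT.
by rewrite !inE eqxx orbT.
Qed.

Lemma fmin_le a l x : x \in a :: l -> foldr Num.min a l <= x.
Proof.
elim: l x => [|y l IH] x; rewrite ?inE.
  by move/eqP->.
rewrite /= ge_min => /orP[/eqP->|/orP[/eqP->|xl]].
- by rewrite (IH a (mem_head _ _)) ?orbT.
- by rewrite lexx.
- by rewrite (IH x) ?orbT // inE xl orbT.
Qed.

Lemma fmin_mem a l : foldr Num.min a l \in a :: l.
Proof.
elim: l => [|y l IH] /=; first by rewrite mem_head.
case: (leP y (foldr Num.min a l)) => _.
  by rewrite !inE eqxx orbT.
by move: IH; rewrite !inE => /orP[->|->]; rewrite ?orbT.
Qed.

Lemma seqmax_ge l x : x \in l -> x <= seqmax l.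
Proof. case: l => // a l xl; apply: fmax_ge; by rewrite inE xl orbT. Qed.

Lemma seqmax_mem l : l != [::] -> seqmax l \in l.
Proof.
case: l => // a l _; rewrite /seqmax /=.
case: (leP a (foldr Num.max a l)) => _; last by rewrite mem_head.
by have := fmax_mem a l.
Qed.

Lemma seqmin_le l x : x \in l -> seqmin l <= x.
Proof. case: l => // a l xl; apply: fmin_le; by rewrite inE xl orbT. Qed.

Lemma seqmin_mem l : l != [::] -> seqmin l \in l.
Proof.
case: l => // a l _; rewrite /seqmin /=.
case: (leP a (foldr Num.min a l)) => _; first by rewrite mem_head.
by have := fmin_mem a l.
Qed.

Lemma seqmax_eq l x : x \in l -> (forall y, y \in l -> y <= x) -> seqmax l = x.
Proof.
move=> xl H; apply/eqP; rewrite eq_le seqmax_ge // andbT H //.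
by apply: seqmax_mem; case: l xl {H}.
Qed.

Lemma seqmin_ge0 l : l != [::] -> (forall y, y \in l -> 0 < y) -> 0 < seqmin l.
Proof. by move=> ne H; apply: H; apply: seqmin_mem. Qed.
End L.

Section P1.
Variables (R : realFieldType) (n : nat) (S : 'I_n -> finType) (u : profile S -> R).

Lemma upd_id (s : profile S) i : upd s i (s i) = s.
Proof. by apply/ffunP => j; rewrite ffunE; case: dfwithP. Qed.

Lemma swE s : sw u s = u s *+ n.
Proof. by rewrite /sw sumr_const card_ord. Qed.

Lemma part1 : admissible u -> PoS u = 1 /\ PoTS u = 1.
Proof.
case=> n0 [u0 [s0 us0]].
set L := [seq u s | s <- enum [pred s : profile S | true]].
have : seqmax L \in L.
  apply: seqmax_mem; apply/eqP => /(congr1 (fun l => u s0 \in l)).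
  by rewrite map_f // mem_enum.
case/mapP => sm _ Hsm.
have Hmax s : u s <= u sm.
  by rewrite -Hsm; apply: seqmax_ge; rewrite map_f // mem_enum.
have NEsm : isNE u sm.
  apply/forallP => i; apply/forallP => b; rewrite upd_id; exact: Hmax.
have Tsm : isTrans u sm.
  by apply/forallP => i; apply/existsP; exists sm; rewrite NEsm eqxx.
have swpos : 0 < sw u sm.
  by rewrite swE pmulrn_lgt0 // (lt_le_trans us0).
have Hsw s : sw u s <= sw u sm by rewrite !swE lerMn2r Hmax orbT.
have Hopt : optsw u = sw u sm.
  by apply: seqmax_eq; [rewrite map_f // mem_enum | move=> y /mapP[s _ ->]].
rewrite /PoS /PoTS Hopt.
rewrite (@seqmax_eq _ _ (sw u sm)); last 2 first.
- by rewrite map_f // mem_enum.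
- by move=> y /mapP[s _ ->].
rewrite (@seqmax_eq _ _ (sw u sm)); last 2 first.
- by rewrite map_f // mem_enum.
- by move=> y /mapP[s _ ->].
by rewrite divff // gt_eqF.
Qed.
End P1.

Section G.
Variables (R : realFieldType) (c : R).
Definition o1 : 'I_2 := @Ordinal 2 1 isT.
Definition S2 : 'I_2 -> finType := fun _ => bool.
Definition mk (a b : bool) : profile S2 := [ffun i : 'I_2 => if i == ord0 then a else b].
Definition ug (s : profile S2) : R :=
  if (s ord0 : bool) && (s o1 : bool) then 1
  else if ~~ (s ord0 : bool) && ~~ (s o1 : bool) then c else 0.

Lemma ord2 (j : 'I_2) : j = ord0 \/ j = o1.
Proof. case: j => -[|[|k]] Hk; [left|right|by []]; exact: val_inj. Qed.

Lemma mkE (s : profile S2) : s = mk (s ord0) (s o1).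
Proof. apply/ffunP => -[[|[|k]] Hk]; rewrite ffunE /=; try by congr (s _); exact: val_inj. Qed.

Lemma upd0 a b x : upd (mk a b) ord0 x = mk x b.
Proof. apply/ffunP => j; case: (ord2 j) => ->; rewrite !ffunE ?dfwith_in ?dfwith_out ?ffunE //. Qed.
Lemma upd1 a b x : upd (mk a b) o1 x = mk a x.
Proof. apply/ffunP => j; case: (ord2 j) => ->; rewrite !ffunE ?dfwith_in ?dfwith_out ?ffunE //. Qed.
Lemma ugE a b : ug (mk a b) = if a && b then 1 else if ~~ a && ~~ b then c else 0.
Proof. by rewrite /ug !ffunE. Qed.
End G.

Section G2.
Variables (R : realFieldType) (c : R).
Hypotheses (c0 : 0 < c) (c1 : c <= 1).
Notation u := (@ug R c).

Lemma isBR0 a b (x : S2 ord0) : isBR u ord0 (mk a b) x = (u (mk (~~x) b) <= u (mk x b)).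
Proof.
apply/forallP/idP => [/(_ (~~ x))|H y]; rewrite ?upd0 //.
by case: (y =P x) => [->|/eqP]; [rewrite lexx|case: x y H => -[]].
Qed.
Lemma isBR1 a b (x : S2 o1) : isBR u o1 (mk a b) x = (u (mk a (~~x)) <= u (mk a x)).
Proof.
apply/forallP/idP => [/(_ (~~ x))|H y]; rewrite ?upd1 //.
by case: (y =P x) => [->|/eqP]; [rewrite lexx|case: x y H => -[]].
Qed.

Lemma isNE_mk a b : isNE u (mk a b) = [&& u (mk (~~a) b) <= u (mk a b) & u (mk a (~~b)) <= u (mk a b)].
Proof.
apply/forallP/andP => [H|[H0 H1] i].
  by have := H ord0; have := H o1; rewrite isBR0 isBR1 !ffunE /=.
by case: (ord2 i) => ->; rewrite ?isBR0 ?isBR1 !ffunE.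
Qed.

Lemma u_ge0 s : 0 <= u s.
Proof. rewrite (mkE s) ugE; case: ifP => _; [|case: ifP => _]; [exact: ler01|exact: ltW|exact: lexx]. Qed.
Lemma u_le1 s : u s <= 1.
Proof. by rewrite (mkE s) ugE; case: ifP => _; [|case: ifP => _]. Qed.

Lemma adm : admissible u.
Proof. split => //; split; first exact: u_ge0. by exists (mk true true); rewrite ugE. Qed.

Lemma opt2 : optsw u = 2.
Proof.
rewrite /optsw (@seqmax_eq _ _ (sw u (mk true true))).
- by rewrite swE ugE.
- by rewrite map_f // mem_enum.
- move=> y /mapP[s _ ->]; rewrite !swE lerMn2r ugE /=; exact: u_le1.
Qed.

Lemma NE_pos s : isNE u s -> 0 < u s.
Proof.
rewrite (mkE s) isNE_mk !ugE.
by case: (s ord0) (s o1) => -[] /=; rewrite ?lexx ?ler10 ?lt01 // ?andbF ?lt0r_neq0 ?lt_geF.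
Qed.
End G2.

Lemma part2 (R : realFieldType) (eps : R) : 0 < eps ->
  exists (n : nat) (S : 'I_n -> finType) (u : profile S -> R),
    admissible u /\ PoA u < eps.
Proof.
move=> e0; set c := eps / (eps + 1).
have e1 : 0 < eps + 1 by rewrite ltr_wpDr ?ltW.
have c0 : 0 < c by rewrite divr_gt0.
have c1 : c <= 1 by rewrite ler_pdivrMr // mul1r lerDl ler01.
have ce : c < eps by rewrite ltr_pdivrMr // mulrDr mulr1 ltrDr mulr_gt0.
exists 2, S2, (@ug R c); split; first exact: adm.
rewrite /PoA opt2 //.
have NEff : isNE (@ug R c) (mk false false).
  by rewrite isNE_mk !ugE /= ltW.
have H : seqmin [seq sw (@ug R c) s | s <- enum [pred s | isNE (@ug R c) s]] <= sw (@ug R c) (mk false false).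
  by apply: seqmin_le; rewrite map_f // mem_enum.
rewrite swE ugE /= in H.
apply: le_lt_trans ce.
rewrite ler_pdivrMr ?ltr0Sn //; apply: le_trans H _.
by rewrite mulr_natr.
Qed.

Definition s1 : profile S2 := mk true false.

Lemma stab (R : realFieldType) : isStableTrans (@ug R 1) s1.
Proof.
have NEtt : isNE (@ug R 1) (mk true true) by rewrite isNE_mk !ugE /= ler01.
have NEff : isNE (@ug R 1) (mk false false) by rewrite isNE_mk !ugE /= ler01.
apply/andP; split.
  apply/forallP => i; apply/existsP; case: (ord2 i) => ->.
    by exists (mk true true); rewrite NEtt !ffunE.
  by exists (mk false false); rewrite NEff !ffunE.
apply/forallP => i; apply/implyP => _; apply/existsP.
case: (ord2 i) => ->.
  exists o1; rewrite /s1 /= !ffunE /= isBR1 !ugE /= ler10 /=.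
  apply/existsP; exists true; rewrite isBR1 upd1 isBR0 !ugE /= ler01 //.
exists ord0; rewrite /s1 /= !ffunE /= isBR0 !ugE /= ler10 /=.
apply/existsP; exists false; rewrite isBR0 upd0 isBR1 !ugE /= ler01 //.
Qed.

Lemma part3 (R : realFieldType) (delta : R) : 0 < delta ->
  exists (n : nat) (S : 'I_n -> finType) (u : profile S -> R),
    admissible u /\ 0 < PoA u /\ PoTA u <= PoSTA u /\ PoSTA u <= delta * PoA u.
Proof.
move=> d0; exists 2, S2, (@ug R 1).
have c0 : (0 : R) < 1 by exact: ltr01.
have c1 : (1 : R) <= 1 by exact: lexx.
have NEtt : isNE (@ug R 1) (mk true true) by rewrite isNE_mk !ugE /= ler01.
have ST := stab R.
have Ts1 : isTrans (@ug R 1) s1 by case/andP: ST.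
have sw1 : sw (@ug R 1) s1 = 0 by rewrite swE ugE mul0rn.
have PoApos : 0 < PoA (@ug R 1).
  rewrite /PoA opt2 // divr_gt0 ?ltr0Sn //; apply: seqmin_ge0.
    by apply/eqP => /(congr1 (fun l => sw (@ug R 1) (mk true true) \in l)); rewrite map_f // mem_enum.
  by move=> y /mapP[s]; rewrite mem_enum => /NE_pos H ->; rewrite swE pmulrn_lgt0 // H.
have PTA : PoTA (@ug R 1) <= 0.
  rewrite /PoTA opt2 // pmulr_lle0 ?invr_gt0 ?ltr0Sn // -sw1; apply: seqmin_le.
  by rewrite map_f // mem_enum.
have PSTA : PoSTA (@ug R 1) <= 0.
  rewrite /PoSTA opt2 // pmulr_lle0 ?invr_gt0 ?ltr0Sn // -sw1; apply: seqmin_le.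
  by rewrite map_f // mem_enum.
have PSTA0 : 0 <= PoSTA (@ug R 1).
  rewrite /PoSTA opt2 // divr_ge0 ?ler0n //.
  have : seqmin [seq sw (@ug R 1) s | s <- enum [pred s | isStableTrans (@ug R 1) s]] \in
     [seq sw (@ug R 1) s | s <- enum [pred s | isStableTrans (@ug R 1) s]].
    apply: seqmin_mem; apply/eqP => /(congr1 (fun l => sw (@ug R 1) s1 \in l)).
    by rewrite map_f // mem_enum.
  by case/mapP => s _ ->; rewrite swE mulrn_wge0 // u_ge0.
split; first exact: adm.
split => //; split; first exact: le_trans PTA PSTA0.
by apply: le_trans PSTA _; rewrite mulr_ge0 ?ltW.
Qed.

Theorem proposition3 (R : realFieldType) :
  (forall (n : nat) (S : 'I_n -> finType) (u : profile S -> R),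
      admissible u -> PoS u = 1 /\ PoTS u = 1) /\
  (forall eps : R, 0 < eps ->
      exists (n : nat) (S : 'I_n -> finType) (u : profile S -> R),
        admissible u /\ PoA u < eps) /\
  (forall delta : R, 0 < delta ->
      exists (n : nat) (S : 'I_n -> finType) (u : profile S -> R),
        admissible u /\ 0 < PoA u /\ PoTA u <= PoSTA u /\ PoSTA u <= delta * PoA u).
Proof.
split; first by move=> n S u; exact: part1.
split; [exact: part2 | exact: part3].
Qed.
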